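(* Run Alg-ABRD, either with its deterministic player selection or with the randomized-selection variant, using the Shapley cost sharing mechanism, and suppose the dynamic does not converge at any step. Let $p^{t_{\max}}$ be the last generated profile and $p^{t^*}$ a generated profile of minimum total cost. Then $C(p^{t_{\max}})\le\lceil\max_j\alpha_j\rceil\cdot\mathcal{H}_N\cdot C(p^{t^*})$, where $\mathcal{H}_N=\sum_{k=1}^N1/k$.
   Context: GND instance: finite resource set $E$; requests (players) $i \in [N]$, each with a reply collection $P_i \subseteq 2^E$ and a weight vector $w_i \in \mathbb{Z}_{\geq 1}^E$; constants $q \in \mathbb{Z}_{\ge 1}$, $\alpha_1,\dots,\alpha_q > 1$; for each $e$, $\sigma_e \geq 0$ and $\xi_{e,j} \geq 0$ (at least one positive), and $F_e(0)=0$, $F_e(l)=\sigma_e+\sum_j \xi_{e,j} l^{\alpha_j}$ for $l>0$. Profile $p\in P=P_1\times\dots\times P_N$; load $l_e^p=\sum_{i: e\in p_i} w_i(e)$; total cost $C(p)=\sum_e F_e(l_e^p)$; $(p'_i,p_{-i})$ is $p$ with coordinate $i$ replaced by $p'_i$. A reply $\varrho$-oracle ($\varrho \ge 1$), given a reply collection $R$ and tolls $\tau:E\to\mathbb{R}_{>0}$, returns $r \in R$ with $\sum_{e\in r}\tau(e) \le \varrho \sum_{e \in r'}\tau(e)$ for all $r'\in R$. Shapley cost sharing: with $S_e=\{i:e\in p_i\}$, for $e\in p_i$, $f_{i,e}(p)=\mathbb{E}\big[F_e\big(\sum_{i'\in S_e^i(\pi_e)}w_{i'}(e)+w_i(e)\big)-F_e\big(\sum_{i'\in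 S_e^i(\pi_e)}w_{i'}(e)\big)\big]$, $\pi_e$ a uniformly random permutation of $S_e$ and $S_e^i(\pi_e)$ the players preceding $i$; $f_{i,e}(p)=0$ if $e\notin p_i$. Individual cost $C_i(p)=\sum_e f_{i,e}(p)$. Alg-ABRD: fix small $\epsilon>0$ and $\epsilon_1=\frac{1+\epsilon}{1-\epsilon}$. Values $\widetilde f_{i,e}(p)$ are fixed with $(1-\epsilon) f_{i,e}(p) \le \widetilde f_{i,e}(p) \le (1+\epsilon) f_{i,e}(p)$, and $\widetilde C_i(p)=\sum_e \widetilde f_{i,e}(p)$. Initial $p^0$: $p^0_i$ is the oracle's output on $P_i$ with tolls $\tau_i^0(e)=F_e(w_i(e))$. At step $t\ge1$: for every $i$ compute $p'_i$ with $\widetilde C_i(p'_i,p^{t-1}_{-i}) \le \varrho\, \widetilde C_i(p''_i,p^{t-1}_{-i})$ for all $p''_i\in P_i$, and $\delta_i^t=\widetilde C_i(p^{t-1}) - \epsilon_1 \widetilde C_i(p'_i,p^{t-1}_{-i})$. If $\delta_i^t\le 0$ for all $i$ the dynamic converges (sets $p^t=p^{t-1}$ and stops). Otherwise, deterministic selection: pick $j$ with $\delta_j^t>0$ and $\delta_j^t\ge\frac1N\sum_i\delta_i^t$ and set $p^t=(p'_j,p^{t-1}_{-j})$; randomized selection: draw $i\in[N]$ uniformly at random and set $p^t=(p'_i,p^{t-1}_{-i})$ if $\delta_i^t>0$, else $p^t=p^{t-1}$. The run lasts a fixed finite number of steps. *)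

(* Defs.v *)
From HB Require Import structures.
From mathcomp Require Import all_boot all_order all_algebra all_fingroup.
From mathcomp Require Import all_classical all_reals all_analysis.
Set Implicit Arguments. Unset Strict Implicit. Unset Printing Implicit Defensive.
Import Order.TTheory GRing.Theory Num.Theory.
Local Open Scope ring_scope.

Section GND.
Variables (R : realType) (E : finType) (N q : nat).

Definition profile := 'I_N -> {set E}.

Definition upd (p : profile) (i : 'I_N) (r : {set E}) : profile :=
  fun k => if k == i then r else p k.

Definition Fcost (alpha : 'I_q -> R) (sigma : E -> R) (xi : E -> 'I_q -> R)
    (e : E) (l : nat) : R :=
  if l == 0%N then 0 else sigma e + \sum_(j < q) xi e j * powR (l%:R) (alpha j).

Definition load (w : 'I_N -> E -> nat) (p : profile) (e : E) : nat :=
  (\sum_(i < N | e \in p i) w i e)%N.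

Definition total_cost alpha sigma xi w (p : profile) : R :=
  \sum_(e : E) Fcost alpha sigma xi e (load w p e).

(* Shapley share f_{i,e}(p): expectation over a uniformly random ordering of
   the users S_e of e.  A uniformly random permutation pi of all players
   induces a uniformly random ordering of S_e; the players of S_e preceding i
   are those i' in S_e with pi i' < pi i. *)
Definition shapley_share alpha sigma xi (w : 'I_N -> E -> nat)
    (i : 'I_N) (e : E) (p : profile) : R :=
  if e \in p i then
    (N`!%:R)^-1 * \sum_(pi : {perm 'I_N})
      (let L := (\sum_(i' < N | (e \in p i') && (pi i' < pi i)%N) w i' e)%N in
       Fcost alpha sigma xi e (L + w i e) - Fcost alpha sigma xi e L)
  else 0.

Definition indiv_cost alpha sigma xi w (i : 'I_N) (p : profile) : R :=
  \sum_(e : E) shapley_share alpha sigma xi w i e p.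

Definition approx_cost (ftil : 'I_N -> E -> profile -> R) (i : 'I_N)
    (p : profile) : R := \sum_(e : E) ftil i e p.

Definition harmonic_number (n : nat) : R := \sum_(1 <= k < n.+1) (k%:R)^-1.

(* Alg-ABRD run of T steps with profiles p 0, ..., p T and, at each step
   t >= 1, the computed approximate best responses br t i. *)
Definition delta (eps : R) ftil (p : nat -> profile) (br : nat -> 'I_N -> {set E})
    (t : nat) (i : 'I_N) : R :=
  approx_cost ftil i (p t.-1)
  - ((1 + eps) / (1 - eps)) * approx_cost ftil i (upd (p t.-1) i (br t i)).

(* deterministic = true : deterministic selection; false : randomized
   selection (every realization of the random draws). *)
Definition is_ABRD_run (deterministic : bool) (rho eps : R) alpha sigma xi
    (w : 'I_N -> E -> nat) (P : 'I_N -> {set {set E}})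
    (ftil : 'I_N -> E -> profile -> R) (T : nat)
    (p : nat -> profile) (br : nat -> 'I_N -> {set E}) : Prop :=
  (* initial profile: oracle outputs for the tolls F_e(w_i(e)) *)
  (forall i, p 0%N i \in P i /\
     forall r', r' \in P i ->
       \sum_(e in p 0%N i) Fcost alpha sigma xi e (w i e)
       <= rho * \sum_(e in r') Fcost alpha sigma xi e (w i e)) /\
  (forall t, (1 <= t <= T)%N ->
     (forall i, br t i \in P i /\
        forall r'', r'' \in P i ->
          approx_cost ftil i (upd (p t.-1) i (br t i))
          <= rho * approx_cost ftil i (upd (p t.-1) i r'')) /\
     (if deterministic then
        exists j, 0 < delta eps ftil p br t j /\
          (N%:R)^-1 * \sum_(i < N) delta eps ftil p br t i
            <= delta eps ftil p br t j /\
          p t = upd (p t.-1) j (br t j)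
      else
        exists i, p t = if 0 < delta eps ftil p br t i
                        then upd (p t.-1) i (br t i) else p t.-1)).

End GND.

(* Main.v *)
Require Import Defs.
From HB Require Import structures.
From mathcomp Require Import all_boot all_order all_algebra all_fingroup.
From mathcomp Require Import ring lra.
Import Order.TTheory GRing.Theory Num.Theory.
Local Open Scope ring_scope.

Section Comb.
Variables (R : realFieldType) (N : nat).
Implicit Types (S T U X : {set 'I_N}).

Lemma setD1_id (y : 'I_N) U : y \notin U -> U :\ y = U.
Proof.
move=> yU; apply/setP => x; rewrite in_setD1; case: eqP => // ->.
by rewrite (negbTE yU).
Qed.

Lemma toggle_sum (A : pred {set 'I_N}) (y : 'I_N) (f : {set 'I_N} -> R) :
  (forall U, A (y |: U) = A (U :\ y)) ->
  (forall U, y \notin U -> f (y |: U) = - f U) ->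
  \sum_(U | A U) f U = 0.
Proof.
move=> HA Hf.
rewrite (bigID (fun U => y \in U)) /=.
rewrite (reindex_onto (fun U => y |: U) (fun U => U :\ y)); last first.
  by move=> U /andP[_ yU]; rewrite setD1K.
have -> : \sum_(j | A (y |: j) && (y \in y |: j) && ((y |: j) :\ y == j)) f (y |: j)
   = \sum_(j | A j && (y \notin j)) - f j.
  apply: eq_big => U.
    rewrite HA setU11 andbT.
    case yU: (y \in U).
      rewrite andbF; case: eqP => [E|]; last by rewrite andbF.
      by move: (setD11 y (y |: U)); rewrite E yU.
    by rewrite setU1K ?yU // eqxx andbT setD1_id ?yU // andbT.
  move=> /andP[/andP[_ _] /eqP E].
  by apply: Hf; rewrite -E setD11.
by rewrite sumrN addNr.
Qed.

Lemma sub_toggle1 T U (y : 'I_N) : y \notin T -> (T \subset y |: U) = (T \subset U :\ y).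
Proof.
move=> yT; apply/subsetP/subsetP => H x xT; have xy : x != y by apply: contraNneq yT => <-.
  by move: (H x xT); rewrite in_setD1 in_setU1 (negbTE xy).
by move: (H x xT); rewrite in_setD1 in_setU1 xy /= => ->; rewrite orbT.
Qed.

Lemma sub_toggle2 U X (y : 'I_N) : y \in X -> (y |: U \subset X) = (U :\ y \subset X).
Proof.
move=> yX; apply/subsetP/subsetP => H x.
  by rewrite in_setD1 => /andP[_ xU]; apply: H; rewrite in_setU1 xU orbT.
rewrite in_setU1; case: (eqVneq x y) => [-> //|xy] /= xU.
by apply: H; rewrite in_setD1 xy.
Qed.

Lemma alt_sum T X : T \subset X ->
  \sum_(U : {set 'I_N} | (T \subset U) && (U \subset X)) (-1) ^+ (#|U| + #|T|) = (T == X)%:R :> R.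
Proof.
move=> TX; case: eqP => [<-|TnX].
  rewrite (big_pred1 T); first by rewrite -signr_odd addnn odd_double.
  move=> U /=; apply/idP/eqP => [/andP[a b]|->]; last by rewrite subxx.
  by apply/eqP; rewrite eqEsubset b a.
have : ~~ (X \subset T).
  by apply/negP => XT; apply: TnX; apply/eqP; rewrite eqEsubset TX.
case/subsetPn => y yX yT.
apply: (@toggle_sum _ y).
  by move=> U; rewrite sub_toggle1 // sub_toggle2.
by move=> U yU; rewrite cardsU1 yU add1n addSn exprS mulN1r.
Qed.


Section Game.
Variable v : {set 'I_N} -> R.

Definition mob U := \sum_(T : {set 'I_N} | T \subset U) (-1) ^+ (#|U| + #|T|) * v T.

Lemma mobius X : \sum_(U : {set 'I_N} | U \subset X) mob U = v X.
Proof.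
rewrite /mob (exchange_big_dep (fun T : {set 'I_N} => T \subset X)) /=; last first.
  by move=> U T UX TU; apply: subset_trans TU UX.
under eq_bigr => T TX.
  rewrite -big_distrl /=.
  rewrite (eq_bigl (fun U : {set 'I_N} => (T \subset U) && (U \subset X))); last first.
    by move=> U; rewrite andbC.
  rewrite alt_sum //.
  over.
rewrite (bigD1 X) //= eqxx mul1r big1 ?addr0 //.
by move=> T /andP[_ TX]; rewrite (negbTE TX) mul0r.
Qed.

Lemma split_sub (g : {set 'I_N} -> R) S i :
  \sum_(U : {set 'I_N} | U \subset S) g U =
  \sum_(U : {set 'I_N} | U \subset S :\ i) g U + \sum_(U : {set 'I_N} | (U \subset S) && (i \in U)) g U.
Proof.
rewrite (bigID (fun U => i \in U)) addrC; congr (_ + _).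
by apply: eq_bigl => U; rewrite subsetD1.
Qed.

Definition maxin (pi : {perm 'I_N}) U i := [forall k in U, (k != i) ==> (pi k < pi i)%N].

Lemma tperm_in U (i k x : 'I_N) : i \in U -> k \in U -> (tperm i k x \in U) = (x \in U).
Proof. by move=> iU kU; case: tpermP => [->|->|] //; rewrite iU kU. Qed.

Lemma maxin_swap pi U i k : i \in U -> k \in U ->
  maxin (tperm i k * pi) U i = maxin pi U k.
Proof.
move=> iU kU; apply/forall_inP/forall_inP => H x xU.
  have := H (tperm i k x); rewrite tperm_in // => /(_ xU).
  rewrite !permM tpermK tpermL.
  have -> : (tperm i k x != i) = (x != k).
    by rewrite (can2_eq (tpermK i k) (tpermK i k)) tpermL.
  done.
have := H (tperm i k x); rewrite tperm_in // => /(_ xU).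
rewrite !permM tpermL.
have -> : (tperm i k x != k) = (x != i).
  by rewrite (can2_eq (tpermK i k) (tpermK i k)) tpermR.
done.
Qed.

Lemma maxin_unique pi U i : i \in U ->
  \sum_(k in U) ((maxin pi U k)%:R : R) = 1.
Proof.
move=> iU.
case: (@arg_maxnP _ i (mem U) (fun k => nat_of_ord (pi k)) iU) => k0 k0U Hk0.
have Mk0 : maxin pi U k0.
  apply/forall_inP => x xU; apply/implyP => xk0.
  rewrite ltn_neqAle; move: (Hk0 x xU) => /= ->; rewrite andbT.
  by apply: contra xk0 => /eqP/val_inj/perm_inj ->.
rewrite (bigD1 k0) //= Mk0 big1 ?addr0 //.
move=> k /andP[kU kk0]; case Mk: (maxin pi U k) => //.
move/forall_inP: Mk => /(_ k0 k0U); rewrite eq_sym kk0 /= => lt.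
by move: (Hk0 k kU) => /=; rewrite leqNgt lt.
Qed.

Lemma count_max U i : i \in U ->
  (\sum_(pi : {perm 'I_N}) ((maxin pi U i)%:R : R)) * #|U|%:R = N`!%:R.
Proof.
move=> iU.
have E : forall k, k \in U -> \sum_(pi : {perm 'I_N}) ((maxin pi U i)%:R : R)
    = \sum_(pi : {perm 'I_N}) (maxin pi U k)%:R.
  move=> k kU; rewrite (reindex_inj (mulgI (tperm i k))) /=.
  by apply: eq_bigr => pi _; rewrite maxin_swap.
transitivity (\sum_(k in U) \sum_(pi : {perm 'I_N}) ((maxin pi U k)%:R : R)).
  symmetry; rewrite (eq_bigr (fun _ => \sum_(pi : {perm 'I_N}) ((maxin pi U i)%:R : R))) => [|k kU]; last by rewrite (E k kU).
  by rewrite sumr_const mulr_natr.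
rewrite exchange_big /=.
under eq_bigr => pi _ do rewrite (@maxin_unique pi U i iU).
by rewrite sumr_const card_Sn.
Qed.

Definition pre (pi : {perm 'I_N}) S i := [set k in S | (pi k < pi i)%N].

Definition shap S i := (N`!%:R)^-1 *
  \sum_(pi : {perm 'I_N}) (v (i |: pre pi S i) - v (pre pi S i)).

Lemma marg_mob pi S i : i \in S ->
  v (i |: pre pi S i) - v (pre pi S i) =
  \sum_(U : {set 'I_N} | (U \subset S) && (i \in U)) mob U * (maxin pi U i)%:R.
Proof.
move=> iS.
have ipre : i \notin pre pi S i by rewrite inE ltnn andbF.
rewrite -!mobius (split_sub _ (i |: pre pi S i) i) setU1K // addrC addKr.
rewrite big_mkcond [RHS]big_mkcond; apply: eq_bigr => U _.
case iU: (i \in U); last by rewrite !andbF.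
rewrite !andbT.
have -> : (U \subset i |: pre pi S i) = (U \subset S) && maxin pi U i.
  apply/idP/andP.
    move/subsetP => H; split.
      apply/subsetP => x xU; move: (H x xU); rewrite in_setU1 inE.
      by case/orP => [/eqP ->|/andP[]].
    apply/forall_inP => x xU; apply/implyP => xi.
    by move: (H x xU); rewrite in_setU1 inE (negbTE xi) /= => /andP[].
  case=> /subsetP US /forall_inP M; apply/subsetP => x xU.
  rewrite in_setU1 inE; case: (eqVneq x i) => //= xi.
  by rewrite US //= (implyP (M x xU)).
by case: (U \subset S) => //=; case: (maxin pi U i); rewrite ?mulr1 ?mulr0.
Qed.

Lemma shap_mob S i : i \in S ->
  shap S i = \sum_(U : {set 'I_N} | (U \subset S) && (i \in U)) mob U / #|U|%:R.
Proof.
move=> iS; rewrite /shap.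
under eq_bigr => pi _ do rewrite marg_mob //.
rewrite exchange_big /= mulr_sumr; apply: eq_bigr => U /andP[_ iU].
rewrite -mulr_sumr.
have Uc : (#|U|%:R : R) != 0 by rewrite pnatr_eq0 -lt0n; apply/card_gt0P; exists i.
have Nc : (N`!%:R : R) != 0 by rewrite pnatr_eq0 -lt0n fact_gt0.
have C := @count_max U i iU.
have -> : \sum_(pi : {perm 'I_N}) ((maxin pi U i)%:R : R) = N`!%:R / #|U|%:R.
  by rewrite -C mulfK.
by field; rewrite Nc Uc.
Qed.

Definition pot S := \sum_(U : {set 'I_N} | U \subset S) mob U / #|U|%:R.

Lemma pot_split S i : pot S = pot (S :\ i) + (if i \in S then shap S i else 0).
Proof.
rewrite /pot (split_sub _ S i); case: ifP => iS; first by rewrite shap_mob.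
rewrite [X in _ + X]big1 // => U /andP[/subsetP US iU].
by move: (US i iU); rewrite iS.
Qed.

Lemma pot_rec S : v set0 = 0 ->
  #|S|%:R * pot S = v S + \sum_(j in S) pot (S :\ j).
Proof.
move=> v0.
have m0 : mob set0 = 0.
  rewrite /mob (big_pred1 set0) ?v0 ?mulr0 // => T /=.
  by rewrite subset0.
rewrite /pot.
under [X in _ = _ + X]eq_bigr => j jS.
  rewrite (eq_bigl (fun U : {set 'I_N} => (U \subset S) && (j \notin U))); last first.
    by move=> U; rewrite subsetD1.
  over.
rewrite (exchange_big_dep (fun U : {set 'I_N} => U \subset S)) /=; last first.
  by move=> j U _ /andP[].
rewrite -(mobius S) mulr_sumr -big_split /=.
apply: eq_bigr => U US.
rewrite sumr_const.
set K := #|_|.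
have -> : K = (#|S| - #|U|)%N.
  have cD : #|S :\: U| = (#|S| - #|U|)%N by rewrite cardsD (setIidPr US).
  rewrite /K -cD; apply: eq_card => x.
  by rewrite !inE /= US unfold_in /= andbC.
have [->|Un0] := eqVneq U set0; first by rewrite m0 !mul0r mul0rn addr0 mulr0.
have Uc : (#|U|%:R : R) != 0.
  by rewrite pnatr_eq0 cards_eq0.
rewrite -[X in _ = _ + X]mulr_natr natrB; last by apply: subset_leq_card.
by field.
Qed.


Definition hn (n : nat) : R := \sum_(1 <= k < n.+1) (k%:R)^-1.

Lemma hn_ge0 n : 0 <= hn n.
Proof. by apply: sumr_ge0 => k _; rewrite invr_ge0 ler0n. Qed.

Lemma hnS n : hn n.+1 = hn n + (n.+1%:R)^-1.
Proof. by rewrite /hn big_nat_recr. Qed.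

Lemma hn_mono m n : (m <= n)%N -> hn m <= hn n.
Proof.
move=> mn; rewrite /hn [X in _ <= X](big_cat_nat (n:=m.+1)) //= ?ltnS //.
by rewrite lerDl; apply: sumr_ge0 => k _; rewrite invr_ge0 ler0n.
Qed.

Lemma pot0 : pot set0 = 0.
Proof.
rewrite /pot (big_pred1 set0) ?cards0 ?invr0 ?mulr0 // => T /=.
by rewrite subset0.
Qed.

Lemma pot_upper S : v set0 = 0 -> (forall T, 0 <= v T) ->
  (forall T T', T \subset T' -> v T <= v T') -> pot S <= hn #|S| * v S.
Proof.
move=> v0 vge0 vmon.
move: {2}#|S| (erefl #|S|) => n; elim: n S => [|n IH] S cS.
  by move/eqP: cS; rewrite cards_eq0 => /eqP ->; rewrite pot0 cards0 /hn big_geq // mul0r.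
have npos : (0 : R) < n.+1%:R by rewrite ltr0n.
rewrite -(ler_pM2l npos).
have E := pot_rec S v0; rewrite cS in E; rewrite E.
have B : \sum_(j in S) pot (S :\ j) <= \sum_(j in S) hn n * v S.
  apply: ler_sum => j jS.
  have cj : #|S :\ j| = n by move: cS; rewrite (cardsD1 j) jS add1n => -[].
  apply: (le_trans (IH _ cj)); rewrite cj ler_wpM2l ?hn_ge0 //.
  by apply: vmon; apply: subD1set.
rewrite sumr_const cS -mulr_natr in B.
rewrite cS.
have -> : n.+1%:R * (hn n.+1 * v S) = v S + hn n * v S * n.+1%:R.
  by rewrite hnS; field; rewrite addrC natr1 pnatr_eq0.
by rewrite lerD2l.
Qed.

Lemma pot_lower (m : R) S : v set0 = 0 -> 0 < m ->
  (forall T, T != set0 -> (#|T|%:R - m) * v T <= \sum_(j in T) v (T :\ j)) ->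
  v S <= m * pot S.
Proof.
move=> v0 m0 Hrec.
move: {2}#|S| (erefl #|S|) => n; elim: n S => [|n IH] S cS.
  by move/eqP: cS; rewrite cards_eq0 => /eqP ->; rewrite pot0 v0 mulr0.
have npos : (0 : R) < n.+1%:R by rewrite ltr0n.
rewrite -(ler_pM2l npos) mulrCA.
have E := pot_rec S v0; rewrite cS in E; rewrite E.
have B : \sum_(j in S) v (S :\ j) <= m * \sum_(j in S) pot (S :\ j).
  rewrite mulr_sumr; apply: ler_sum => j jS.
  have cj : #|S :\ j| = n by move: cS; rewrite (cardsD1 j) jS add1n => -[].
  exact: IH.
have Sn0 : S != set0 by rewrite -card_gt0 cS.
have := Hrec S Sn0; rewrite cS => H.
set A := \sum_(j in S) pot (S :\ j) in B *.
set Bv := \sum_(j in S) v (S :\ j) in B H.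
rewrite mulrDr.
nra.
Qed.
End Game.
End Comb.
Arguments mob {R N} v U.
Arguments pot {R N} v S.
Arguments shap {R N} v S i.
Arguments pre {N} pi S i.
Arguments pot_split {R N} v S i.
Arguments pot_upper {R N} v S.
Arguments pot_lower {R N} v m S.
Arguments hn_mono {R} m n.

From mathcomp Require Import all_classical all_reals all_analysis.
Import Order.TTheory GRing.Theory Num.Theory.
Local Open Scope ring_scope.
Set Implicit Arguments. Unset Strict Implicit.

Section Bern.
Variable R : realType.

Lemma bern_nat (z : R) M : 0 <= z <= 1 -> 1 - M%:R * z <= (1 - z) ^+ M.
Proof.
move=> /andP[z0 z1]; elim: M => [|M IH]; first by rewrite mul0r subr0 expr0.
rewrite exprSr.
have h1 : 0 <= 1 - z by rewrite subr_ge0.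
apply: (le_trans _ (ler_wpM2r h1 IH)).
have Mge0 : (0:R) <= M%:R by rewrite ler0n.
rewrite -natr1; nra.
Qed.

Lemma bern (M : nat) (a L x : R) : 1 <= a -> a <= M%:R -> 0 < L -> 0 <= x <= L ->
  powR L a * (1 - M%:R * x / L) <= powR (L - x) a.
Proof.
move=> a1 aM L0 /andP[x0 xL].
have -> : L - x = L * (1 - x / L) by field; rewrite gt_eqF.
rewrite powRM ?(ltW L0) //; last by rewrite subr_ge0 ler_pdivrMr // mul1r.
apply: ler_wpM2l; first exact: powR_ge0.
have z0 : 0 <= x / L by rewrite divr_ge0 // ltW.
have z1 : x / L <= 1 by rewrite ler_pdivrMr // mul1r.
have M1 : (1 : R) <= M%:R by apply: le_trans aM.
have [y0|yn0] := eqVneq (1 - x / L) 0.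
  rewrite y0 powR0; last by rewrite gt_eqF // (lt_le_trans ltr01).
  have xl1 : x / L = 1 by lra.
  by rewrite -mulrA xl1 mulr1 subr_le0.
have ypos : 0 < 1 - x / L by rewrite lt_neqAle eq_sym yn0 subr_ge0.
have y1 : (0 < 1 - x / L <= 1) by rewrite ypos lerBlDr lerDl.
have H1 := ger_powR y1 aM.
apply: le_trans H1.
rewrite powR_mulrn; last exact: ltW.
by rewrite -mulrA; apply: bern_nat; rewrite z0 z1.
Qed.
End Bern.

Section GameE.
Variables (R : realType) (E : finType) (N q : nat) (alpha : 'I_q -> R)
  (sigma : E -> R) (xi : E -> 'I_q -> R) (w : 'I_N -> E -> nat).
Hypotheses (w1 : forall i e, (1 <= w i e)%N) (alpha1 : forall j, 1 < alpha j)
  (sig0 : forall e, 0 <= sigma e) (xi0 : forall e j, 0 <= xi e j).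

Local Notation F := (Fcost alpha sigma xi).
Definition ld e (T : {set 'I_N}) := (\sum_(k in T) w k e)%N.
Definition vg e (T : {set 'I_N}) := F e (ld e T).
Definition Sset (p : profile E N) e : {set 'I_N} := finset (fun k => e \in p k).

Lemma ldD1 e (T : {set 'I_N}) j : j \in T -> ld e T = (w j e + ld e (T :\ j))%N.
Proof. by move=> jT; rewrite /ld (big_setD1 j). Qed.

Lemma ld0 e (T : {set 'I_N}) : (ld e T == 0)%N = (T == finset.set0).
Proof.
case: (set_0Vmem T) => [->|[k kT]]; first by rewrite /ld big_set0 !eqxx.
rewrite (ldD1 e kT); have := w1 k e.
have -> : (T == finset.set0) = false by apply/negbTE/set0Pn; exists k.
by case: (w k e).
Qed.

Lemma alpha_neq0 j : alpha j != 0.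
Proof. by rewrite gt_eqF // (lt_trans ltr01). Qed.

Lemma vg_split e (T : {set 'I_N}) : vg e T =
  (T != finset.set0)%:R * sigma e + \sum_(j < q) xi e j * powR (ld e T)%:R (alpha j).
Proof.
rewrite /vg /Fcost ld0; case: eqP => [->|_]; last by rewrite mul1r.
rewrite mul0r add0r /ld big_set0 big1 // => j _.
by rewrite powR0 ?mulr0 // alpha_neq0.
Qed.

Lemma vg0 e : vg e finset.set0 = 0.
Proof. by rewrite /vg /Fcost /ld big_set0. Qed.

Lemma F_ge0 e l : 0 <= F e l.
Proof.
rewrite /Fcost; case: eqP => // _; apply: addr_ge0 => //.
by apply: sumr_ge0 => j _; apply: mulr_ge0 => //; apply: powR_ge0.
Qed.

Lemma vg_ge0 e (T : {set 'I_N}) : 0 <= vg e T.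
Proof. exact: F_ge0. Qed.

Lemma F_mono e l l' : (l <= l')%N -> F e l <= F e l'.
Proof.
move=> ll'; case: (eqVneq l 0%N) => [->|l0]; first by rewrite {1}/Fcost eqxx; apply: F_ge0.
rewrite /Fcost (negbTE l0).
have -> : (l' == 0)%N = false by apply/eqP => l'0; move: l0 ll'; rewrite l'0; case: l.
rewrite lerD2l; apply: ler_sum => j _; apply: ler_wpM2l => //.
apply: ge0_ler_powR; rewrite ?nnegrE ?ler0n ?ler_nat //.
by apply: ltW; apply: (lt_trans ltr01).
Qed.

Lemma ld_mono e (T T' : {set 'I_N}) : T \subset T' -> (ld e T <= ld e T')%N.
Proof. by move=> TT'; rewrite /ld [X in (_ <= X)%N](big_setID T) /= (finset.setIidPr TT') leq_addr. Qed.

Lemma vg_mono e (T T' : {set 'I_N}) : T \subset T' -> vg e T <= vg e T'.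
Proof. by move=> TT'; apply: F_mono; apply: ld_mono. Qed.

Lemma vg_rec (M : nat) e (T : {set 'I_N}) : (1 <= M)%N -> (forall j, alpha j <= M%:R) -> T != finset.set0 ->
  (#|T|%:R - M%:R) * vg e T <= \sum_(j in T) vg e (T :\ j).
Proof.
move=> M1 aM Tn0.
rewrite vg_split Tn0 mul1r.
under [X in _ <= X]eq_bigr => j jT do rewrite vg_split.
rewrite big_split /= mulrDr; apply: lerD.
  have Mr1 : (1 : R) <= M%:R by rewrite ler1n.
  have [T1|T2] := leqP #|T| 1.
    have -> : #|T| = 1%N by apply/eqP; rewrite eqn_leq T1 card_gt0.
    apply: (le_trans (y := 0)); last by apply: sumr_ge0 => j _; apply: mulr_ge0 => //; rewrite ler0n.
    by apply: mulr_le0_ge0 => //; rewrite subr_le0.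
  have -> : \sum_(j in T) ((T :\ j != finset.set0)%:R * sigma e) = \sum_(j in T) sigma e.
    apply: eq_bigr => j jT.
    have -> : (T :\ j != finset.set0) by move: T2; rewrite (cardsD1 j T) jT add1n ltnS card_gt0.
    by rewrite mul1r.
  rewrite sumr_const -[X in _ <= X]mulr_natr mulrC ler_wpM2l //.
  by rewrite lerBlDr lerDl ler0n.
rewrite mulr_sumr exchange_big /=; apply: ler_sum => j _.
rewrite -mulr_sumr mulrCA; apply: ler_wpM2l => //.
set L := ld e T.
have Lpos : (0 : R) < L%:R by rewrite ltr0n lt0n ld0.
have ldr : forall k, k \in T -> (ld e (T :\ k))%:R = L%:R - (w k e)%:R :> R.
  by move=> k kT; rewrite /L (ldD1 e kT) natrD addrAC subrr add0r.
have H : forall k, k \in T ->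
    powR L%:R (alpha j) * (1 - M%:R * (w k e)%:R / L%:R) <= powR (ld e (T :\ k))%:R (alpha j).
  move=> k kT; rewrite ldr //; apply: bern => //; first exact: ltW.
  rewrite ler0n /= /L (ldD1 e kT) natrD lerDl ler0n //.
apply: (le_trans _ (ler_sum _ H)).
rewrite -mulr_sumr sumrB sumr_const -mulr_suml -mulr_sumr.
have -> : \sum_(k in T) ((w k e)%:R : R) = L%:R by rewrite /L /ld natr_sum.
rewrite mulfK ?gt_eqF // mulrC.
by rewrite -[X in _ <= _ * (X - _)]mulr_natr mul1r.
Qed.


Lemma load_Sset p e : load w p e = ld e (Sset p e).
Proof. by rewrite /load /ld; apply: eq_bigl => k; rewrite finset.in_set. Qed.

Lemma total_Sset p : total_cost alpha sigma xi w p = \sum_e vg e (Sset p e).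
Proof. by rewrite /total_cost; apply: eq_bigr => e _; rewrite load_Sset. Qed.

Lemma share_shap p i e : shapley_share alpha sigma xi w i e p =
  if i \in Sset p e then shap (vg e) (Sset p e) i else 0.
Proof.
rewrite /shapley_share finset.in_set; case: ifP => // _.
rewrite /shap; congr (_ * _); apply: eq_bigr => pi _ /=.
have ipre : i \notin pre pi (Sset p e) i by rewrite finset.in_set ltnn andbF.
rewrite /vg /ld big_setU1 //= addnC.
have -> : (\sum_(i' < N | (e \in p i') && (pi i' < pi i)%N) w i' e)%N
        = (\sum_(k in pre pi (Sset p e) i) w k e)%N.
  by apply: eq_bigl => k; rewrite !finset.in_set.
by [].
Qed.

Definition Phi p := \sum_e pot (vg e) (Sset p e).

Lemma Phi_indiv p i : Phi p =
  \sum_e pot (vg e) (Sset p e :\ i) + indiv_cost alpha sigma xi w i p.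
Proof.
rewrite /Phi /indiv_cost -big_split; apply: eq_bigr => e _.
by rewrite share_shap; apply: pot_split.
Qed.

Lemma Sset_upd p i r e : Sset (upd p i r) e :\ i = Sset p e :\ i.
Proof.
apply/setP => k; rewrite !in_setD1 !finset.in_set /upd.
by case: (eqVneq k i).
Qed.

Lemma Phi_upd p i r : Phi (upd p i r) - indiv_cost alpha sigma xi w i (upd p i r)
  = Phi p - indiv_cost alpha sigma xi w i p.
Proof.
rewrite !(Phi_indiv _ i) !addrK; apply: eq_bigr => e _.
by rewrite Sset_upd.
Qed.

Lemma Phi_upper p : Phi p <= harmonic_number R N * total_cost alpha sigma xi w p.
Proof.
rewrite total_Sset mulr_sumr; apply: ler_sum => e _.
apply: (le_trans (pot_upper (vg e) (Sset p e) (vg0 e) (@vg_ge0 e) (@vg_mono e))).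
apply: ler_wpM2r; first exact: vg_ge0.
have cN : (#|Sset p e| <= N)%N by have := max_card (mem (Sset p e)); rewrite card_ord.
exact: (@hn_mono R _ _ cN).


Qed.

Lemma Phi_lower p (M : nat) : (1 <= M)%N -> (forall j, alpha j <= M%:R) ->
  total_cost alpha sigma xi w p <= M%:R * Phi p.
Proof.
move=> M1 aM; rewrite total_Sset /Phi mulr_sumr; apply: ler_sum => e _.
apply: pot_lower; first exact: vg0.
  by rewrite ltr0n.
by move=> T Tn0; apply: vg_rec.
Qed.

Lemma improve (P : 'I_N -> {set {set E}}) (eps : R) (ftil : 'I_N -> E -> profile E N -> R)
  (pp : profile E N) j r : 0 < eps < 1 ->
  (forall (pp : profile E N) i e, (forall k, pp k \in P k) ->
     (1 - eps) * shapley_share alpha sigma xi w i e pp <= ftil i e pp /\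
     ftil i e pp <= (1 + eps) * shapley_share alpha sigma xi w i e pp) ->
  (forall k, pp k \in P k) -> r \in P j ->
  0 < approx_cost ftil j pp - ((1 + eps) / (1 - eps)) * approx_cost ftil j (upd pp j r) ->
  Phi (upd pp j r) <= Phi pp.
Proof.
move=> /andP[e0 e1] Hf Hpp Hr Hd.
have Hpp' : forall k, upd pp j r k \in P k.
  by move=> k; rewrite /upd; case: eqP => [->|]. 
set Cj := indiv_cost alpha sigma xi w j pp.
set Cj' := indiv_cost alpha sigma xi w j (upd pp j r).
have A1 : approx_cost ftil j pp <= (1 + eps) * Cj.
  rewrite /Cj /indiv_cost mulr_sumr; apply: ler_sum => e _.
  by case: (Hf pp j e Hpp).
have A2 : (1 - eps) * Cj' <= approx_cost ftil j (upd pp j r).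
  rewrite /Cj' /indiv_cost mulr_sumr; apply: ler_sum => e _.
  by case: (Hf _ j e Hpp').
set k := (1 + eps) / (1 - eps).
have k0 : 0 <= k by rewrite divr_ge0 // ?subr_ge0 ltW // (lt_trans ltr01) // ltrDl.
have kE : k * (1 - eps) = 1 + eps by rewrite /k mulfVK // gt_eqF // subr_gt0.
have A3 : (1 + eps) * Cj' <= k * approx_cost ftil j (upd pp j r).
  by rewrite -kE -mulrA ler_wpM2l.
have C : Cj' <= Cj.
  have ep : 0 < 1 + eps by rewrite (lt_trans ltr01) // ltrDl.
  rewrite -(ler_pM2l ep); apply: (le_trans A3); apply: (le_trans _ A1).
  by rewrite -subr_ge0; apply: ltW.
have := Phi_upd pp j r; rewrite -/Cj -/Cj' => HE; lra.
Qed.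
End GameE.

Unset Implicit Arguments. Set Strict Implicit.

Theorem theorem9p4 (R : realType) (E : finType) (N q : nat)
  (w : 'I_N -> E -> nat) (P : 'I_N -> {set {set E}})
  (alpha : 'I_q -> R) (sigma : E -> R) (xi : E -> 'I_q -> R)
  (rho eps : R) (ftil : 'I_N -> E -> profile E N -> R)
  (deterministic : bool) (T : nat)
  (p : nat -> profile E N) (br : nat -> 'I_N -> {set E}) :
  (forall i e, (1 <= w i e)%N) ->
  (0 < q)%N ->
  (forall j, 1 < alpha j) ->
  (forall e, 0 <= sigma e) ->
  (forall e j, 0 <= xi e j) ->
  (forall e, 0 < sigma e \/ exists j, 0 < xi e j) ->
  1 <= rho ->
  0 < eps < 1 ->
  (forall (pp : profile E N) i e, (forall k, pp k \in P k) ->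
     (1 - eps) * shapley_share alpha sigma xi w i e pp <= ftil i e pp /\
     ftil i e pp <= (1 + eps) * shapley_share alpha sigma xi w i e pp) ->
  is_ABRD_run deterministic rho eps alpha sigma xi w P ftil T p br ->
  (* the dynamic does not converge at any step *)
  (forall t, (1 <= t <= T)%N -> exists i, 0 < delta eps ftil p br t i) ->
  forall tstar, (tstar <= T)%N ->
  (forall t, (t <= T)%N ->
     total_cost alpha sigma xi w (p tstar) <= total_cost alpha sigma xi w (p t)) ->
  total_cost alpha sigma xi w (p T)
  <= (Num.ceil (\big[Num.max/0]_(j < q) alpha j))%:~R * @harmonic_number R N
     * total_cost alpha sigma xi w (p tstar).
Proof.
move=> w1 q0 a1 s0 x0 _ _ Heps Hf [H0 Hstep] _ tstar Ht _.
set mx := \big[Num.max/0]_(j < q) alpha j.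
set c := Num.ceil mx.
have amx : forall j, alpha j <= mx by move=> j; apply: le_bigmax.
have mx0 : 0 < mx by apply: lt_le_trans (amx (Ordinal q0)); apply: lt_trans (a1 _).
have c0 : 0 < c by rewrite ceil_gt0.
pose M := `|c|%N.
have cM : (c%:~R : R) = M%:R by rewrite natr_absz gtr0_norm.
have M1 : (1 <= M)%N by rewrite absz_gt0 gt_eqF.
have aM : forall j, alpha j <= M%:R.
  by move=> j; rewrite -cM; apply: le_trans (amx j) (ceil_ge _).
have inP : forall t, (t <= T)%N -> forall k, p t k \in P k.
  elim=> [_ k|t IH tT k]; first by case: (H0 k).
  have [Hbr Hsel] := Hstep t.+1 tT.
  have IH' := IH (ltnW tT).
  have updP : forall j, upd (p t) j (br t.+1 j) k \in P k.
    by move=> j; rewrite /upd; case: eqP => [->|_]; [case: (Hbr j) | apply: IH'].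
  move: Hsel; case: ifP => _ [j]; first by case=> _ [_ ->]; apply: updP.
  move=> ->.
  by case: ifP => _; [apply: updP | apply: IH'].
have dec : forall t, (t < T)%N -> Phi alpha sigma xi w (p t.+1) <= Phi alpha sigma xi w (p t).
  move=> t tT.
  have [Hbr Hsel] := Hstep t.+1 tT.
  have IH' := inP t (ltnW tT).
  have key : forall j, 0 < delta eps ftil p br t.+1 j ->
      Phi alpha sigma xi w (upd (p t) j (br t.+1 j)) <= Phi alpha sigma xi w (p t).
    move=> j dj; apply: (improve Heps Hf IH'); first by case: (Hbr j).
    exact: dj.
  move: Hsel; case: ifP => _ [j]; first by case=> dj [_ ->]; apply: key.
  move=> ->.
  by case: ifP => [di|_]; [apply: key | ].
have mono : forall t, (tstar <= t <= T)%N ->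
    Phi alpha sigma xi w (p t) <= Phi alpha sigma xi w (p tstar).
  elim=> [|t IH] /andP[st tT].
    by move: st; rewrite leqn0 => /eqP ->.
  case: (eqVneq tstar t.+1) => [-> //|ne].
  have st' : (tstar <= t)%N by rewrite -ltnS ltn_neqAle ne.
  apply: (le_trans (dec t tT)); apply: IH; by rewrite st' ltnW.
apply: (le_trans (Phi_lower w1 a1 s0 x0 (p T) M1 aM)).
rewrite cM -mulrA; apply: ler_wpM2l; first by rewrite ler0n.
apply: (le_trans (mono T _)); first by rewrite Ht leqnn.
exact: Phi_upper.
Qed.
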